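(* Let $\ell$ be a $c$-approximate pseudo-metric ($c\ge1$), $\mathcal{H}\subseteq\mathcal{Y}^{\mathcal{X}}$ with $\operatorname{diam}(\mathcal{H})<\infty$, $U\subseteq\mathcal{H}$, $x\in\mathcal{X}$, $s_0,s_1\in\mathcal{Y}$, $\gamma=\ell(s_0,s_1)$, and $U_b=\{h\in U:h(x)=s_b\}$ for $b\in\{0,1\}$, with $U_0,U_1$ both nonempty. Then there exists $b\in\{0,1\}$ with $\Phi(U_b)\le\Phi(U)-\gamma/(4c)$.
   Context: $c$-approximate pseudo-metric: $\ell(y,y)=0$, symmetry, and $\ell(y_1,y_2)\le c(\ell(y_1,y_3)+\ell(y_2,y_3))$. $d_\ell(f,g)=\sup_{x}\ell(f(x),g(x))$, $\operatorname{diam}(\mathcal{H})=\sup_{f,g\in\mathcal{H}}d_\ell(f,g)$. $N(U,\varepsilon)$ is the minimal cardinality of $S\subseteq\mathcal{H}$ such that each $u\in U$ is within $d_\ell$-distance $\le\varepsilon$ of some element of $S$. $\Phi(U)=\int_0^{\operatorname{diam}(\mathcal{H})}\log_2N(U,\varepsilon)\,d\varepsilon\in[0,\infty]$. *)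

(* Defs.v *)
From mathcomp Require Import all_boot all_order all_algebra.
From mathcomp Require Import all_classical all_reals all_analysis.
Set Implicit Arguments. Unset Strict Implicit. Unset Printing Implicit Defensive.
Import Order.TTheory GRing.Theory Num.Theory.
Local Open Scope classical_set_scope.
Local Open Scope ring_scope.

Section Defs.
Context {R : realType} {X Y : Type}.

Definition approx_pmetric (c : R) (ell : Y -> Y -> R) : Prop :=
  (forall y, ell y y = 0) /\
  (forall y1 y2, ell y1 y2 = ell y2 y1) /\
  (forall y1 y2 y3, ell y1 y2 <= c * (ell y1 y3 + ell y2 y3)).

Definition dl (ell : Y -> Y -> R) (f g : X -> Y) : \bar R :=
  ereal_sup [set (ell (f x) (g x))%:E | x in [set: X]].

Definition diam (ell : Y -> Y -> R) (H : set (X -> Y)) : \bar R :=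
  ereal_sup [set dl ell fg.1 fg.2 | fg in [set fg | H fg.1 /\ H fg.2]].

(* A finite S of cardinality n is represented by an enumeration 'I_n -> S. *)
Definition covnum (ell : Y -> Y -> R) (H U : set (X -> Y)) (eps : R) : \bar R :=
  ereal_inf [set (n%:R)%:E | n in [set n : nat | exists S : 'I_n -> (X -> Y),
      (forall i, H (S i)) /\
      (forall u, U u -> exists i, (dl ell u (S i) <= eps%:E)%E)]].

Definition log2e (v : \bar R) : \bar R :=
  match v with
  | r%:E => if r <= 0 then -oo%E else (ln r / ln 2)%:E
  | +oo%E => +oo%E
  | -oo%E => -oo%E
  end.

Definition Phi (ell : Y -> Y -> R) (H U : set (X -> Y)) : \bar R :=
  (\int[lebesgue_measure]_(e in `[0%R, fine (diam ell H)]%classic) log2e (covnum ell H U e))%E.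

End Defs.

(* Main.v *)
Require Import Defs.
From mathcomp Require Import all_boot all_order all_algebra.
From mathcomp Require Import all_classical all_reals all_analysis.
From mathcomp Require Import ring lra measurable_realfun.
Import Order.TTheory GRing.Theory Num.Theory.
Local Open Scope classical_set_scope.
Local Open Scope ring_scope.

Section Aux.
Context {R : realType} {X Y : Type} (ell : Y -> Y -> R) (H : set (X -> Y)).
Local Open Scope ereal_scope.

Lemma dl_ge (f g : X -> Y) z : (ell (f z) (g z))%:E <= dl ell f g.
Proof. by apply: ereal_sup_ubound; exists z. Qed.

Lemma covnum_ge1 (V : set (X -> Y)) e : V !=set0 -> 1 <= covnum ell H V e.
Proof.
move=> [v Vv]; apply/ereal_infP => _ [n [S [_ cov]] <-].
have [i _] := cov v Vv; rewrite lee_fin ler1n.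
exact: (leq_ltn_trans (leq0n i) (ltn_ord i)).
Qed.

Lemma covnum_sub (V W : set (X -> Y)) e : V `<=` W ->
  covnum ell H V e <= covnum ell H W e.
Proof.
move=> VW; apply: le_ereal_inf => _ [n [S [HS cov]] <-]; exists n => //.
by exists S; split => // u /VW; exact: cov.
Qed.

Lemma covnum_eps (V : set (X -> Y)) (e1 e2 : R) : (e1 <= e2)%R ->
  covnum ell H V e2 <= covnum ell H V e1.
Proof.
move=> le; apply: le_ereal_inf => _ [n [S [HS cov]] <-]; exists n => //.
exists S; split => // u /cov [i Hi]; exists i.
by apply: le_trans Hi _; rewrite lee_fin.
Qed.

End Aux.

Section Log.
Context {R : realType}.
Local Open Scope ereal_scope.

Lemma ln2_gt0 : (0 < ln (2 : R))%R.
Proof. by apply: ln_gt0; rewrite ltr1n. Qed.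

Lemma log2e_le (a b : \bar R) : a <= b -> log2e a <= log2e b.
Proof.
case: a => [r||]; case: b => [s||] //=; rewrite ?lee_fin => rs.
- case: ifPn => r0; first by rewrite leNye.
  have s0 : (0 < s)%R by rewrite ltNge; apply: contra r0 => s0; apply: le_trans rs s0.
  rewrite ifF; last by apply/negbTE; rewrite -ltNge.
  rewrite lee_fin ler_pM2r ?invr_gt0 ?ln2_gt0 // ler_ln // posrE // ltNge; exact: r0.
all: try by case: ifPn; rewrite ?leNye ?leey.
Qed.

Lemma log2e_ge0 (a : \bar R) : 1 <= a -> 0 <= log2e a.
Proof.
case: a => [r||] //=; rewrite lee_fin => r1.
rewrite ifF; last by apply/negbTE; rewrite -ltNge (lt_le_trans ltr01).
rewrite lee_fin divr_ge0 ?ln_ge0 // ltW //.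
by rewrite ltr1n.
Qed.

Lemma log2e_key (a b n : \bar R) : 1 <= a -> 1 <= b -> a + b <= n ->
  (log2e a + 1) + (log2e b + 1) <= log2e n + log2e n.
Proof.
case: n => [r||]; last 2 first.
- by move=> *; rewrite /= leey.
- by case: a => // [p|]; case: b => //.
case: a => [p||] //; case: b => [q||] //; rewrite !lee_fin => p1 q1 pqr.
have r0 : (0 < r)%R by lra.
rewrite /= !ifF; try (apply/negbTE; rewrite -ltNge; lra).
rewrite -!EFinD lee_fin.
have l2 := @ln2_gt0.
rewrite -(ler_pM2r l2) !mulrDl !divfK ?gt_eqF //.
rewrite mul1r.
rewrite -!lnM ?posrE; try lra.
rewrite ler_ln ?posrE; try nra.
have h1 : (0 <= (p - q) * (p - q))%R by rewrite -expr2 sqr_ge0.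
have h2 : ((p + q) * (p + q) <= r * r)%R by apply: ler_pM; lra.
have -> : (p * 2 * (q * 2) = (p + q) * (p + q) - (p - q) * (p - q))%R by ring.
lra.
Qed.

End Log.

Section Split.
Context {R : realType} {X Y : Type} (ell : Y -> Y -> R) (H : set (X -> Y)).
Local Open Scope ereal_scope.

Lemma covnum_split (U : set (X -> Y)) x s0 s1 (c e : R) : (0 <= c)%R ->
  approx_pmetric c ell -> (c * (e + e) < ell s0 s1)%R ->
  covnum ell H [set h | U h /\ h x = s0] e + covnum ell H [set h | U h /\ h x = s1] e
  <= covnum ell H U e.
Proof.
move=> c0 [_ [ellC ellT]] ce.
apply/ereal_infP => _ [n [S [HS cov]] <-].
pose P i := `[< exists u, (U u /\ u x = s0) /\ dl ell u (S i) <= e%:E >].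
pose A : {set 'I_n} := finset P.
have close u i : dl ell u (S i) <= e%:E -> (ell (u x) (S i x) <= e)%R.
  by move=> h; rewrite -lee_fin (le_trans (dl_ge _ _ _ _) h).
have cov0 : covnum ell H [set h | U h /\ h x = s0] e <= #|A|%:R%:E.
  apply: ereal_inf_lbound; exists #|A| => //.
  exists (fun j : 'I_#|A| => S (enum_val j)); split; first by move=> j; exact: HS.
  move=> u [Uu ux]; have [i hi] := cov u Uu.
  have iA : i \in A by rewrite inE; apply/asboolP; exists u.
  by exists (enum_rank_in iA i); rewrite enum_rankK_in.
have cov1 : covnum ell H [set h | U h /\ h x = s1] e <= #|~: A|%:R%:E.
  apply: ereal_inf_lbound; exists #|~: A| => //.
  exists (fun j : 'I_#|~: A| => S (enum_val j)); split; first by move=> j; exact: HS.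
  move=> u [Uu ux]; have [i hi] := cov u Uu.
  have iA : i \in ~: A.
    rewrite !inE; apply/negP => /asboolP [v [[Uv vx] hv]].
    have := ellT (v x) (u x) (S i x); rewrite vx ux => h3.
    have h4 : (c * (ell s0 (S i x) + ell s1 (S i x)) <= c * (e + e))%R.
      by rewrite ler_wpM2l // lerD // -?vx -?ux; apply: close.
    by have := le_lt_trans (le_trans h3 h4) ce; rewrite ltxx.
  by exists (enum_rank_in iA i); rewrite enum_rankK_in.
apply: le_trans (leeD cov0 cov1) _.
by rewrite -EFinD -natrD cardsC card_ord.
Qed.

Definition logcov (V : set (X -> Y)) (e : R) : \bar R := log2e (covnum ell H V e).

Lemma meas_logcov (V : set (X -> Y)) (D : set R) : measurable D ->
  measurable_fun D (logcov V).
Proof.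
move=> mD; apply: (measurability _ (ErealGenCInfty.measurableE R)) => // _ [_ [r ->] <-].
apply: measurableI => //; apply: is_interval_measurable => s t /=.
rewrite !in_itv /= !andbT => fs ft u /andP[su ut].
rewrite in_itv /= andbT; apply: le_trans ft _.
by rewrite /logcov; apply: log2e_le; apply: covnum_eps.
Qed.

End Split.

Theorem lemma3p3 (R : realType) (X Y : Type) (c : R) (ell : Y -> Y -> R)
  (H U : set (X -> Y)) (x : X) (s0 s1 : Y) :
  1 <= c ->
  approx_pmetric c ell ->
  (diam ell H < +oo)%E ->
  U `<=` H ->
  [set h | U h /\ h x = s0] !=set0 ->
  [set h | U h /\ h x = s1] !=set0 ->
  exists b : bool,
    (Phi ell H [set h | U h /\ h x = (if b then s1 else s0)]
       <= Phi ell H U - (ell s0 s1 / (4 * c))%:E)%E.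
Proof.
move=> c1 hell hdiam UH ne0 ne1.
have [h0 [U0h0 h0x]] := ne0; have [h1 [U1h1 h1x]] := ne1.
set g := ell s0 s1.
have c0 : 0 < c by apply: lt_le_trans c1.
have g0 : 0 <= g.
  have := hell.2.2 s0 s0 s1; rewrite hell.1 pmulr_rge0 // /g; lra.
have t1 : (g%:E <= dl ell h0 h1)%E.
  by rewrite /g -h0x -h1x; exact: (dl_ge ell h0 h1 x).
have t2 : (dl ell h0 h1 <= diam ell H)%E.
  by apply: ereal_sup_ubound; exists (h0, h1) => //; split; apply: UH.
have gdiam := le_trans t1 t2.
set D := fine (diam ell H).
have gD : g <= D.
  move: hdiam gdiam; rewrite /D; case: (diam ell H) => [r||] //=.
set a := g / (2 * c).
have a0 : 0 <= a by rewrite /a divr_ge0 // mulr_ge0 // ltW.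
have ag : a <= g by rewrite /a ler_pdivrMr ?mulr_gt0 //; nra.
set I := `[0, D]%classic.
set A := `[0, a[%classic.
have mI : measurable I by exact: measurable_itv.
have mA : measurable A by exact: measurable_itv.
set U0 := [set h | U h /\ h x = s0].
set U1 := [set h | U h /\ h x = s1].
have neU : U !=set0 by exists h0.
have U0U : U0 `<=` U by move=> h [].
have U1U : U1 `<=` U by move=> h [].
pose hh := fun e : R => ((\1_A e : R)%:E : \bar R).
have mhh : measurable_fun I hh.
  by apply/measurable_EFinP; exact: measurable_indic.
have hh0 e : (0 <= hh e)%E by rewrite /hh lee_fin indicE.
have F0 V e : V !=set0 -> (0 <= logcov ell H V e)%E.
  by move=> nV; apply: log2e_ge0; exact: covnum_ge1.
have ihh : (\int[lebesgue_measure]_(e in I) hh e = a%:E)%E.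
  rewrite integral_indic //.
  have -> : A `&` I = A.
    apply/seteqP; split => e /=; first by case.
    move=> eA; split => //; move: eA; rewrite /A /I /= !in_itv /= => /andP[e0 ea].
    by rewrite e0 /=; apply: le_trans (ltW ea) _; apply: le_trans ag gD.
  rewrite /A; apply: eq_trans (lebesgue_measure_itv `[0, a[) _ => /=.
  case: ifPn => [_|]; first by rewrite sube0.
  by rewrite lte_fin -leNgt => a0'; congr (_%:E); apply/eqP; rewrite eq_le a0 a0'.
have key : (\int[lebesgue_measure]_(e in I) ((logcov ell H U0 e + hh e) + (logcov ell H U1 e + hh e))
    <= \int[lebesgue_measure]_(e in I) (logcov ell H U e + logcov ell H U e))%E.
  apply: ge0_le_integral => //.
  - by move=> e _; rewrite !adde_ge0 // F0.
  - by apply: emeasurable_funD; apply: emeasurable_funD => //; exact: meas_logcov.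
  - by apply: emeasurable_funD; exact: meas_logcov.
  move=> e Ie; rewrite /hh indicE.
  have [eA|eA] := boolP (e \in A).
  + rewrite /= /logcov; apply: log2e_key; try exact: covnum_ge1.
    apply: (@covnum_split R X Y ell H U x s0 s1 c e (ltW c0) hell).
    move: eA; rewrite /A inE /= in_itv /= => /andP[_ ea].
    move: ea; rewrite /a ltr_pdivlMr ?mulr_gt0 // => ea.
    rewrite -/g; lra.
  + rewrite /= !adde0; apply: leeD; apply: log2e_le; exact: covnum_sub.
have EV V : V !=set0 -> (\int[lebesgue_measure]_(e in I) (logcov ell H V e + hh e)
    = Phi ell H V + a%:E)%E.
  move=> nV; rewrite ge0_integralD //; first by rewrite ihh.
  - by move=> e _; apply: F0.
  - exact: meas_logcov.
have EF : (\int[lebesgue_measure]_(e in I) (logcov ell H U e + logcov ell H U e)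
    = Phi ell H U + Phi ell H U)%E.
  rewrite ge0_integralD //.
  - by move=> e _; apply: F0.
  - exact: meas_logcov.
  - by move=> e _; apply: F0.
  - exact: meas_logcov.
have EL : (\int[lebesgue_measure]_(e in I)
        (logcov ell H U0 e + hh e + (logcov ell H U1 e + hh e)) =
     \int[lebesgue_measure]_(e in I) (logcov ell H U0 e + hh e) +
     \int[lebesgue_measure]_(e in I) (logcov ell H U1 e + hh e))%E.
  rewrite ge0_integralD //.
  - by move=> e _; rewrite adde_ge0 // F0.
  - by apply: emeasurable_funD => //; exact: meas_logcov.
  - by move=> e _; rewrite adde_ge0 // F0.
  - by apply: emeasurable_funD => //; exact: meas_logcov.
rewrite EL EF (EV U0 ne0) (EV U1 ne1) in key.
have P0 V : V !=set0 -> (0 <= Phi ell H V)%E.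
  by move=> nV; apply: integral_ge0 => e _; apply: F0.
have ga : g / (4 * c) = a / 2.
  by rewrite /a -mulrA -invfM; congr (_ / _); ring.
rewrite ga.
suff : (Phi ell H U0 <= Phi ell H U - (a / 2)%:E)%E \/
       (Phi ell H U1 <= Phi ell H U - (a / 2)%:E)%E.
  by case=> h; [exists false | exists true].
move: (P0 _ neU) (P0 _ ne0) (P0 _ ne1) key.
rewrite -/U0 -/U1.
case: (Phi ell H U) => [p||] //; last first.
  by move=> *; left; rewrite /= addye ?leey.
case: (Phi ell H U0) => [p0||] //; case: (Phi ell H U1) => [p1||] //.
move=> _ _ _ key.
have kk : ((p0 + a) + (p1 + a) <= p + p)%R.
  by rewrite -lee_fin !EFinD.
have [p01|p10'] := leP p0 p1.
  by left; rewrite -EFinB lee_fin; lra.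
by right; rewrite -EFinB lee_fin; lra.
Qed.
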